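(* Consider the surface-mounted permanent magnet synchronous machine (SPMSM) model with state $x=(i_\alpha,i_\beta,\omega,\theta)^T$, input $\mathcal{V}=(v_\alpha,v_\beta)^T$ and output $y=h(x)=(i_\alpha,i_\beta)^T$: \[ \frac{d}{dt}\begin{bmatrix}i_\alpha\\ i_\beta\end{bmatrix}=\frac{1}{L_0}\Big(\mathcal{V}-R\begin{bmatrix}i_\alpha\\ i_\beta\end{bmatrix}-\psi_r\,\omega\begin{bmatrix}-\sin\theta\\ \cos\theta\end{bmatrix}\Big),\quad \frac{d\omega}{dt}=\frac{p}{J}(T_m-T_l),\quad \frac{d\theta}{dt}=\omega, \] with $T_m=\frac{3p}{2}\psi_r(i_\beta\cos\theta-i_\alpha\sin\theta)$. Let $i_d=i_\alpha\cos\theta+i_\beta\sin\theta$. Then: (i) the determinant of the $4\times4$ matrix $\frac{\partial}{\partial x}\begin{bmatrix}h\\ \mathcal{L}_fh\end{bmatrix}$ equals $\Delta_{y1}=\omega\,(\psi_r/L_0)^2$, so the rank condition holds whenever $\omega\neq0$; (ii) the determinant of the $4\times4$ matrix $\frac{\partial}{\partial x}\begin{bmatrix}h\\ \mathcal{L}_f^2h\end{bmatrix}$ equals \[ \Delta_{y2}=\frac{\psi_r^2}{L_0^2}\Big[\Big(2\omega^2+\frac{R^2}{L_0^2}+\frac{3p^2}{J}\psi_r i_d\Big)\omega-\frac{R}{L_0}\frac{d\omega}{dt}\Big]. \] In particular, at zero speed $\omega=0$ the SPMSM is locally weakly observable if the rotor acceleration $\frac{d\omega}{dt}$ is nonzero.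 *)

(* Defs.v *)
From HB Require Import structures.
From mathcomp Require Import all_boot all_order all_algebra.
From mathcomp Require Import all_classical all_reals all_analysis.
Set Implicit Arguments. Unset Strict Implicit. Unset Printing Implicit Defensive.
Import Order.TTheory GRing.Theory Num.Theory.
Import numFieldNormedType.Exports.
Local Open Scope ring_scope.

Section SPMSM.
Variable R : realType.

Definition ialpha (x : 'rV[R]_4) : R := x 0 0.
Definition ibeta  (x : 'rV[R]_4) : R := x 0 1.
Definition omega  (x : 'rV[R]_4) : R := x 0 2.
Definition theta  (x : 'rV[R]_4) : R := x 0 3.

Definition Tm (p psi : R) (x : 'rV[R]_4) : R :=
  (3 * p / 2) * psi * (ibeta x * cos (theta x) - ialpha x * sin (theta x)).

Definition id_cur (x : 'rV[R]_4) : R :=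
  ialpha x * cos (theta x) + ibeta x * sin (theta x).

(* Vector field f of the SPMSM for constant input (v_alpha, v_beta) and
   constant load torque T_l; parameters L0 (inductance), Rs (resistance),
   psi (flux psi_r), p (pole pairs), J (inertia). *)
Definition spmsm_f (L0 Rs psi p J Tl va vb : R) (x : 'rV[R]_4) : 'rV[R]_4 :=
  \row_(j < 4)
    match val j with
    | 0 => (va - Rs * ialpha x - psi * omega x * (- sin (theta x))) / L0
    | 1 => (vb - Rs * ibeta x - psi * omega x * cos (theta x)) / L0
    | 2 => p / J * (Tm p psi x - Tl)
    | _ => omega x
    end.

Definition spmsm_h (k : 'I_2) (x : 'rV[R]_4) : R := x 0 (widen_ord (isT : (2 <= 4)%N) k).

Definition partial (g : 'rV[R]_4 -> R) (j : 'I_4) (x : 'rV[R]_4) : R :=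
  'D_(delta_mx 0 j) g x.

Definition lie (f : 'rV[R]_4 -> 'rV[R]_4) (g : 'rV[R]_4 -> R) (x : 'rV[R]_4) : R :=
  \sum_(j < 4) partial g j x * f x 0 j.

Definition stacked (f : 'rV[R]_4 -> 'rV[R]_4) (n : nat) (i : 'I_4) : 'rV[R]_4 -> R :=
  match fintype.split (i : 'I_(2 + 2)) with
  | inl k => spmsm_h k
  | inr k => iter n (lie f) (spmsm_h k)
  end.

Definition obs_jacobian (f : 'rV[R]_4 -> 'rV[R]_4) (n : nat) (x : 'rV[R]_4) : 'M[R]_4 :=
  \matrix_(i < 4, j < 4) partial (stacked f n i) j x.

End SPMSM.

(* Main.v *)
Require Import Defs.
From HB Require Import structures.
From mathcomp Require Import all_boot all_order all_algebra.
From mathcomp Require Import all_classical all_reals all_analysis.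
From mathcomp Require Import ring.
Import Order.TTheory GRing.Theory Num.Theory.
Import numFieldNormedType.Exports.
Local Open Scope ring_scope.

Lemma rc_mx (R : comRingType) n (F : nat -> nat -> R) (i j : 'I_n.+1) :
  row' i (col' j (\matrix_(a < n.+1, b < n.+1) F a b)) =
  \matrix_(a < n, b < n) F (bump i a) (bump j b).
Proof. by apply/matrixP => a b; rewrite !mxE. Qed.

Lemma det4 (R : comRingType) (M : 'M[R]_4) : M 0 0 = 1 -> M 0 1 = 0 -> M 0 2 = 0 -> M 0 3 = 0 -> M 1 0 = 0 -> M 1 1 = 1 -> M 1 2 = 0 -> M 1 3 = 0 -> \det M = M 2 2 * M 3 3 - M 2 3 * M 3 2.
Proof.
pose m (i j : nat) := M (inord i) (inord j).
have mE (i j : 'I_4) : M i j = m i j by rewrite /m !inord_val.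
rewrite !mE => h00 h01 h02 h03 h10 h11 h12 h13.
have -> : M = \matrix_(i, j) m i j by apply/matrixP => i j; rewrite mxE.
have e2 : ((1 %% 4 + 1 %% 4) %% 4 = 2)%N by [].
have e3 : ((1 %% 4 + (1 %% 4 + 1 %% 4) %% 4) %% 4 = 3)%N by [].
rewrite /= e3 e2.
repeat (rewrite det_mx00 || rewrite rc_mx || rewrite (expand_det_row _ 0) || rewrite /cofactor || rewrite big_ord_recl || rewrite big_ord0).
rewrite !mxE /bump /=.
have e1 : (1 %% 4 = 1)%N by [].
move: h00 h01 h02 h03 h10 h11 h12 h13; rewrite /= !e1 => h00 h01 h02 h03 h10 h11 h12 h13.
rewrite h00 h01 h02 h03 h10 h11 h12 h13.
ring.
Qed.
Section H.
Variable R : realType.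
Local Notation V := 'rV[R]_4.

Lemma dC (k : R) (x v : V) : is_derive x v (fun _ : V => k) 0.
Proof. exact: (is_derive_cst k). Qed.

Lemma dD (F G : V -> R) x v dF dG : is_derive x v F dF -> is_derive x v G dG ->
  is_derive x v (fun y => F y + G y) (dF + dG).
Proof. move=> h1 h2; exact: (is_deriveD h1 h2). Qed.

Lemma dB (F G : V -> R) x v dF dG : is_derive x v F dF -> is_derive x v G dG ->
  is_derive x v (fun y => F y - G y) (dF - dG).
Proof. move=> h1 h2; exact: (is_deriveB h1 h2). Qed.

Lemma dN (F : V -> R) x v dF : is_derive x v F dF ->
  is_derive x v (fun y => - F y) (- dF).
Proof. move=> h1; exact: (is_deriveN h1). Qed.

Lemma dM (F G : V -> R) x v dF dG : is_derive x v F dF -> is_derive x v G dG ->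
  is_derive x v (fun y => F y * G y) (F x * dG + G x * dF).
Proof. move=> h1 h2; exact: (is_deriveM h1 h2). Qed.

Definition coordl (c : 'I_4) : {linear V -> R}.
by exists (fun N : V => N 0 c); do 2![eexists]; do ?[constructor];
     rewrite ?mxE// => ? *; rewrite ?mxE//; move=> ?; rewrite !mxE.
Defined.

Lemma dcoord c (x v : V) : is_derive x v (fun y : V => y 0 c) (v 0 c).
Proof.
have e : (fun y : V => y 0 c) = coordl c by [].
apply: DeriveDef; first exact/diff_derivable/differentiable_coord.
rewrite deriveE; last exact/differentiable_coord.
by rewrite e diff_lin //; exact: coord_continuous.
Qed.

Lemma d1 (g : R -> R) (a k : R) : differentiable g a -> 'd g a k = k * 'D_1 g a.
Proof.
move=> dg; rewrite deriveE // [in LHS](_ : k = k *: (1:R)); last by rewrite /GRing.scale /= mulr1.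
by rewrite linearZ.
Qed.

Lemma dcomp (g : R -> R) c (x v : V) dg : is_derive (x 0 c) 1 g dg ->
  is_derive x v (fun y : V => g (y 0 c)) (dg * v 0 c).
Proof.
move=> hg.
have dgd : differentiable g (x 0 c) by apply/derivable1_diffP; case: hg.
have e : (fun y : V => g (y 0 c)) = g \o (fun y : V => y 0 c) by [].
have dc := @differentiable_coord R 1 4 x 0 c.
have dcomp : differentiable (g \o (fun y : V => y 0 c)) x by exact: differentiable_comp.
apply: DeriveDef; rewrite e; first exact: diff_derivable.
rewrite deriveE // diff_comp //= d1 // -deriveE //.
by rewrite (@derive_val _ _ _ _ _ _ _ (dcoord c x v)) (@derive_val _ _ _ _ _ _ _ hg) mulrC.
Qed.

Lemma dsin c (x v : V) : is_derive x v (fun y : V => sin (y 0 c)) (cos (x 0 c) * v 0 c).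
Proof. exact: dcomp. Qed.
Lemma dcos c (x v : V) : is_derive x v (fun y : V => cos (y 0 c)) (- sin (x 0 c) * v 0 c).
Proof. exact: dcomp. Qed.

Lemma pE (g : V -> R) (j : 'I_4) (x : V) (d : R) : is_derive x (delta_mx 0 j) g d -> partial g j x = d.
Proof. by move=> h; rewrite /partial derive_val. Qed.


Ltac dtac := repeat first [apply: dC | apply: dcoord | apply: dsin | apply: dcos
  | apply: dD | apply: dN | apply: dM].

Variables (L0 Rs psi p J Tl va vb : R).
Let f := spmsm_f L0 Rs psi p J Tl va vb.


Definition F0 (y : V) : R := (va - Rs * y 0 0 - psi * y 0 2 * - sin (y 0 3)) / L0.
Definition F1 (y : V) : R := (vb - Rs * y 0 1 - psi * y 0 2 * cos (y 0 3)) / L0.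
Definition F2 (y : V) : R :=
  p / J * (3 * p / 2 * psi * (y 0 1 * cos (y 0 3) - y 0 0 * sin (y 0 3)) - Tl).
Definition G0 (y : V) : R :=
  (- Rs * F0 y + psi * sin (y 0 3) * F2 y + psi * y 0 2 * cos (y 0 3) * y 0 2) / L0.
Definition G1 (y : V) : R :=
  (- Rs * F1 y - psi * cos (y 0 3) * F2 y + psi * y 0 2 * sin (y 0 3) * y 0 2) / L0.

Ltac dtac2 := repeat first [apply: dC | apply: dcoord | apply: dsin | apply: dcos
  | apply: dD | apply: dN | apply: dM | rewrite /F0 /F1 /F2 /G0 /G1 /spmsm_h].

Lemma stk0 n : stacked f n 0 = spmsm_h 0.
Proof. rewrite /stacked; case: splitP => k hk.
- by congr spmsm_h; apply/val_inj; rewrite /= -hk.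
- by have := ltn_ord k; rewrite -(ltn_add2l 2) -hk. Qed.
Lemma stk1 n : stacked f n 1 = spmsm_h 1.
Proof. rewrite /stacked; case: splitP => k hk.
- by congr spmsm_h; apply/val_inj; rewrite /= -hk.
- by have := ltn_ord k; rewrite -(ltn_add2l 2) -hk. Qed.
Lemma stk2 n : stacked f n 2 = iter n (lie f) (spmsm_h 0).
Proof. rewrite /stacked; case: splitP => k hk.
- by have := ltn_ord k; rewrite -hk.
- by congr (iter n (lie f) (spmsm_h _)); apply/val_inj/eqP; rewrite -(eqn_add2l 2) -hk. Qed.
Lemma stk3 n : stacked f n 3 = iter n (lie f) (spmsm_h 1).
Proof. rewrite /stacked; case: splitP => k hk.
- by have := ltn_ord k; rewrite -hk.
- by congr (iter n (lie f) (spmsm_h _)); apply/val_inj/eqP; rewrite -(eqn_add2l 2) -hk. Qed.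

Lemma lie_h0 : lie f (spmsm_h 0) = F0.
Proof.
apply: funext => x; rewrite /lie !big_ord_recl big_ord0.
do 4 (erewrite pE; last by dtac2).
rewrite !mxE /= /Tm /ialpha /ibeta /omega /theta /F0. ring.
Qed.
Lemma lie_h1 : lie f (spmsm_h 1) = F1.
Proof.
apply: funext => x; rewrite /lie !big_ord_recl big_ord0.
do 4 (erewrite pE; last by dtac2).
rewrite !mxE /= /Tm /ialpha /ibeta /omega /theta /F1; ring.
Qed.
Lemma lie_F0 : lie f F0 = G0.
Proof.
apply: funext => x; rewrite /lie !big_ord_recl big_ord0.
do 4 (erewrite pE; last by dtac2).
rewrite !mxE /= /Tm /ialpha /ibeta /omega /theta /G0 /F0 /F2; ring.
Qed.
Lemma lie_F1 : lie f F1 = G1.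
Proof.
apply: funext => x; rewrite /lie !big_ord_recl big_ord0.
do 4 (erewrite pE; last by dtac2).
rewrite !mxE /= /Tm /ialpha /ibeta /omega /theta /G1 /F1 /F2; ring.
Qed.


Lemma trigmul (a b t : R) : a = b * (cos t ^+ 2 + sin t ^+ 2) -> a = b.
Proof. by rewrite cos2Dsin2 mulr1. Qed.

Lemma hrows n x : let M := obs_jacobian f n x in
  [/\ M 0 0 = 1, M 0 1 = 0, M 0 2 = 0 & M 0 3 = 0] /\
  [/\ M 1 0 = 0, M 1 1 = 1, M 1 2 = 0 & M 1 3 = 0].
Proof.
rewrite /obs_jacobian !mxE stk0 stk1.
split; split; (erewrite pE; last by dtac2); by rewrite mxE.
Qed.

Lemma det1 (hL : L0 != 0) x : \det (obs_jacobian f 1 x) = omega x * (psi / L0) ^+ 2.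
Proof.
have [[? ? ? ?] [? ? ? ?]] := hrows 1 x.
rewrite det4 //.
rewrite !mxE stk2 stk3 /= lie_h0 lie_h1.
do 4 (erewrite pE; last by dtac2).
rewrite !mxE /= /omega; apply: (@trigmul _ _ (x 0 3)); by field.
Qed.

Lemma det2 (hL : L0 != 0) (hJ : J != 0) x : \det (obs_jacobian f 2 x) =
       psi ^+ 2 / L0 ^+ 2 *
       ((2 * omega x ^+ 2 + Rs ^+ 2 / L0 ^+ 2 + 3 * p ^+ 2 / J * psi * id_cur x)
          * omega x
        - Rs / L0 * f x 0 2).
Proof.
have [[? ? ? ?] [? ? ? ?]] := hrows 2 x.
rewrite det4 //.
rewrite !mxE stk2 stk3 /= lie_h0 lie_h1 lie_F0 lie_F1.
do 4 (erewrite pE; last by dtac2).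
rewrite !mxE /= /F0 /F1 /F2 /id_cur /Tm /ialpha /ibeta /omega /theta.
apply: (@trigmul _ _ (x 0 3)); field; by rewrite hJ hL.
Qed.
End H.

Theorem mainTheorem2 (R : realType) (L0 Rs psi p J Tl va vb : R)
  (hL0 : 0 < L0) (hRs : 0 < Rs) (hpsi : 0 < psi) (hp : 0 < p) (hJ : 0 < J) :
  let f := spmsm_f L0 Rs psi p J Tl va vb in
  (forall x : 'rV[R]_4,
     \det (obs_jacobian f 1 x) = omega x * (psi / L0) ^+ 2) /\
  (forall x : 'rV[R]_4,
     \det (obs_jacobian f 2 x) =
       psi ^+ 2 / L0 ^+ 2 *
       ((2 * omega x ^+ 2 + Rs ^+ 2 / L0 ^+ 2 + 3 * p ^+ 2 / J * psi * id_cur x)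
          * omega x
        - Rs / L0 * f x 0 2)) /\
  (forall x : 'rV[R]_4,
     omega x = 0 -> f x 0 2 != 0 -> \det (obs_jacobian f 2 x) != 0).
Proof.
move=> f.
have hL : L0 != 0 by rewrite gt_eqF.
have hJ' : J != 0 by rewrite gt_eqF.
have D2 := @det2 R L0 Rs psi p J Tl va vb hL hJ'.
split; first exact: (@det1 R L0 Rs psi p J Tl va vb hL).
split; first exact: D2.
move=> x h0 hF; rewrite D2 h0 mulr0 add0r.
rewrite mulf_neq0 // ?oppr_eq0 ?mulf_neq0 // ?invr_eq0 ?expf_neq0 // ?gt_eqF //.
Qed.
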